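(* Let $n \geq 2$, let $(x_1,\dots,x_{n+1})$ be the standard coordinates on $\mathbb{R}^{n+1}_1$, and let $F:\mathbb{R}^{n+1}\to\mathbb{R}^{n+1}$, $(y_1,\dots,y_{n+1}) = F(x_1,\dots,x_{n+1})$, be a smooth diffeomorphism, so that $(y_1,\dots,y_{n+1})$ is another (global) coordinate system on $\mathbb{R}^{n+1}_1$. Assume that for every smooth function $\varphi$ on $\mathbb{R}^{n+1}$, $$\sum_{i=1}^n \frac{\partial^2 \varphi}{\partial x_i^2} - \frac{\partial^2 \varphi}{\partial x_{n+1}^2} = 0 \ \text{ everywhere} \iff \sum_{i=1}^n \frac{\partial^2 \varphi}{\partial y_i^2} - \frac{\partial^2 \varphi}{\partial y_{n+1}^2} = 0 \ \text{ everywhere},$$ where in the right-hand side $\varphi$ is expressed in the $y$-coordinates (i.e. one considers $\varphi\circ F^{-1}$ as a function of $y$). For $i=1,\dots,n+1$ let $r_i = \big(\frac{\partial y_i}{\partial x_1},\dots,\frac{\partial y_i}{\partial x_{n+1}}\big)$ be the $i$-th row of the Jacobian matrix $\big(\frac{\partial y_i}{\partial x_j}\big)$. Then at every point: the rows are mutually orthogonal with respect to the Minkowski inner product, i.e. $\langle r_i, r_j\rangle = 0$ for $i \neq j$; they all have the same length, namely $\langle r_i,r_i\rangle = -\langle r_{n+1},r_{n+1}\rangle$ for $1\le i\le n$; and $r_1,\dots,r_n$ are spacelike while $r_{n+1}$ is timelike.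
   Context: $\mathbb{R}^{n+1}_1$ denotes $\mathbb{R}^{n+1}$ with the Minkowski inner product of signature $(+,\dots,+,-)$: $\langle u,v\rangle = \sum_{i=1}^n u_i v_i - u_{n+1}v_{n+1}$. A vector $v$ is spacelike if $\langle v,v\rangle>0$ (or $v=0$), timelike if $\langle v,v\rangle<0$, null if $\langle v,v\rangle = 0$, $v\neq 0$. *)

(* Defs.v *)
From Stdlib Require Import Reals.
From mathcomp Require Import ssreflect ssrfun ssrbool eqtype ssrnat fintype.
Set Implicit Arguments. Unset Strict Implicit.
Open Scope R_scope.

(* Points of R^N, coordinates indexed by 'I_N (index k corresponds to x_{k+1}). *)
Definition Pt (N : nat) := 'I_N -> R.

Fixpoint sumR (m : nat) (f : nat -> R) : R :=
  match m with O => 0 | S m' => sumR m' f + f m' end.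

Definition shift N (x : Pt N) (i : 'I_N) (t : R) : Pt N :=
  fun k => if k == i then x k + t else x k.

Definition is_partial N (f : Pt N -> R) (i : 'I_N) (g : Pt N -> R) : Prop :=
  forall x, derivable_pt_lim (fun t => f (shift x i t)) 0 (g x).

Definition contN N (f : Pt N -> R) : Prop :=
  forall x eps, 0 < eps -> exists delta, 0 < delta /\
    forall y, (forall k, Rabs (y k - x k) < delta) -> Rabs (f y - f x) < eps.

Fixpoint Ck N (k : nat) (f : Pt N -> R) : Prop :=
  match k with
  | O => contN f
  | S k' => contN f /\ forall i, exists g, is_partial f i g /\ Ck k' g
  end.

Definition smooth N (f : Pt N -> R) : Prop := forall k, Ck k f.

Definition smooth_map N (F : Pt N -> Pt N) : Prop :=
  forall i, smooth (fun x => F x i).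

Definition diffeo_with_inv N (F G : Pt N -> Pt N) : Prop :=
  smooth_map F /\ smooth_map G /\ (forall x, G (F x) = x) /\ (forall y, F (G y) = y).

Definition wave_zero (n : nat) (phi : Pt n.+1 -> R) : Prop :=
  forall (g h : 'I_n.+1 -> Pt n.+1 -> R),
    (forall i, is_partial phi i (g i)) ->
    (forall i, is_partial (g i) i (h i)) ->
    forall x, sumR n (fun k => h (inord k) x) - h ord_max x = 0.

Definition mink (n : nat) (u v : Pt n.+1) : R :=
  sumR n (fun k => u (inord k) * v (inord k)) - u ord_max * v ord_max.

Definition spacelike n (v : Pt n.+1) : Prop := mink v v > 0 \/ v = (fun _ => 0).
Definition timelike n (v : Pt n.+1) : Prop := mink v v < 0.

(* Main.v *)
Require Import Defs.
From Stdlib Require Import Reals.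
From mathcomp Require Import ssreflect ssrfun ssrbool eqtype ssrnat fintype.
From Stdlib Require Import Lra Psatz FunctionalExtensionality IndefiniteDescription.
Open Scope R_scope.
Set Implicit Arguments. Unset Strict Implicit.
Lemma shift0 N (x : Pt N) i : shift x i 0 = x.
Proof. apply functional_extensionality => k; rewrite /shift; case: (k == i) => //; lra. Qed.

Lemma shift_shift N (x : Pt N) i a b : shift (shift x i a) i b = shift x i (a + b).
Proof. apply functional_extensionality => k; rewrite /shift; case: (k == i) => //; lra. Qed.

Lemma dpl_transl (h : R -> R) t l :
  derivable_pt_lim (fun s => h (t + s)) 0 l -> derivable_pt_lim h t l.
Proof.
  move=> H eps Heps. case: (H eps Heps) => d Hd. exists d => u Hu Hud.
  have := Hd u Hu Hud. by rewrite Rplus_0_l Rplus_0_r.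
Qed.

Lemma is_partial_at N (f : Pt N -> R) i g :
  is_partial f i g -> forall x t, derivable_pt_lim (fun s => f (shift x i s)) t (g (shift x i t)).
Proof.
  move=> H x t. apply dpl_transl.
  have := H (shift x i t).
  have -> : (fun t0 => f (shift (shift x i t) i t0)) = (fun s => f (shift x i (t + s))).
  { apply functional_extensionality => s; by rewrite shift_shift. }
  done.
Qed.

Lemma is_partial_uniq N (f : Pt N -> R) i g1 g2 :
  is_partial f i g1 -> is_partial f i g2 -> g1 = g2.
Proof.
  move=> H1 H2; apply functional_extensionality => x.
  exact: uniqueness_limite (H1 x) (H2 x).
Qed.

Lemma is_partial_const N (c : R) i : is_partial (fun _ : Pt N => c) i (fun _ => 0).
Proof. move=> x. exact: derivable_pt_lim_const. Qed.

Lemma is_partial_plus N (f g : Pt N -> R) i f' g' :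
  is_partial f i f' -> is_partial g i g' ->
  is_partial (fun x => f x + g x) i (fun x => f' x + g' x).
Proof.
  move=> Hf Hg x. have := derivable_pt_lim_plus _ _ _ _ _ (Hf x) (Hg x). done.
Qed.

Lemma is_partial_mult N (f g : Pt N -> R) i f' g' :
  is_partial f i f' -> is_partial g i g' ->
  is_partial (fun x => f x * g x) i (fun x => f' x * g x + f x * g' x).
Proof.
  move=> Hf Hg x. have := derivable_pt_lim_mult _ _ _ _ _ (Hf x) (Hg x).
  rewrite /mult_fct /= !shift0. done.
Qed.

Definition ev N (a : 'I_N) : 'I_N -> R := fun k => if k == a then 1 else 0.

Lemma is_partial_proj N (a i : 'I_N) :
  is_partial (fun x : Pt N => x a) i (fun _ => ev i a).
Proof.
  move=> x. rewrite /shift /ev. case: (a == i).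
  - have := derivable_pt_lim_plus _ _ 0 _ _ (derivable_pt_lim_const (x a) 0) (derivable_pt_lim_id 0).
    rewrite Rplus_0_l. done.
  - exact: derivable_pt_lim_const.
Qed.
Lemma contN_const N (c : R) : contN (fun _ : Pt N => c).
Proof. move=> x e he; exists 1; split; [lra|] => y _. rewrite Rminus_diag Rabs_R0; lra. Qed.

Lemma contN_proj N (a : 'I_N) : contN (fun x : Pt N => x a).
Proof. move=> x e he; exists e; split => // y Hy; exact: Hy. Qed.

Lemma contN_plus N (f g : Pt N -> R) : contN f -> contN g -> contN (fun x => f x + g x).
Proof.
  move=> Hf Hg x e he.
  case: (Hf x (e/2) ltac:(lra)) => d1 [d1p H1].
  case: (Hg x (e/2) ltac:(lra)) => d2 [d2p H2].
  exists (Rmin d1 d2); split; first by apply Rmin_pos.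
  move=> y Hy.
  have h1 := H1 y (fun k => Rlt_le_trans _ _ _ (Hy k) (Rmin_l _ _)).
  have h2 := H2 y (fun k => Rlt_le_trans _ _ _ (Hy k) (Rmin_r _ _)).
  replace (f y + g y - (f x + g x)) with ((f y - f x) + (g y - g x)) by ring.
  apply: Rle_lt_trans (Rabs_triang _ _) _. lra.
Qed.

Lemma contN_mult N (f g : Pt N -> R) : contN f -> contN g -> contN (fun x => f x * g x).
Proof.
  move=> Hf Hg x e he.
  set A := Rabs (f x) + 1. set B := Rabs (g x) + 1.
  have Ap : 0 < A by rewrite /A; move: (Rabs_pos (f x)); lra.
  have Bp : 0 < B by rewrite /B; move: (Rabs_pos (g x)); lra.
  set e1 := Rmin 1 (e / (2 * A)). set e2 := e / (2 * B).
  have e1p : 0 < e1 by apply Rmin_pos; [lra| apply Rdiv_lt_0_compat; lra].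
  have e2p : 0 < e2 by apply Rdiv_lt_0_compat; lra.
  case: (Hf x e2 e2p) => d1 [d1p H1].
  case: (Hg x e1 e1p) => d2 [d2p H2].
  exists (Rmin d1 d2); split; first by apply Rmin_pos.
  move=> y Hy.
  have h1 := H1 y (fun k => Rlt_le_trans _ _ _ (Hy k) (Rmin_l _ _)).
  have h2 := H2 y (fun k => Rlt_le_trans _ _ _ (Hy k) (Rmin_r _ _)).
  replace (f y * g y - f x * g x) with ((f y - f x) * g y + f x * (g y - g x)) by ring.
  apply: Rle_lt_trans (Rabs_triang _ _) _. rewrite !Rabs_mult.
  have gy : Rabs (g y) <= B.
  { have : Rabs (g y) <= Rabs (g x) + Rabs (g y - g x).
    { replace (g y) with (g x + (g y - g x)) at 1 by ring. apply Rabs_triang. }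
    have : e1 <= 1 by apply Rmin_l. rewrite /B; lra. }
  have h2' : Rabs (g y - g x) < e / (2 * A) by apply: Rlt_le_trans h2 (Rmin_r _ _).
  have t1 : Rabs (f y - f x) * Rabs (g y) < e / 2.
  { have : Rabs (f y - f x) * Rabs (g y) <= e2 * B.
    { apply Rmult_le_compat; try apply Rabs_pos; lra. }
    have : e2 * B = e / 2 by rewrite /e2; field; lra.
    have : Rabs (f y - f x) * Rabs (g y) <= Rabs (f y - f x) * B.
    { apply Rmult_le_compat_l; [apply Rabs_pos|lra]. }
    have : Rabs (f y - f x) * B < e2 * B by apply Rmult_lt_compat_r.
    lra. }
  have t2 : Rabs (f x) * Rabs (g y - g x) <= e / 2.
  { have : Rabs (f x) * Rabs (g y - g x) <= A * (e / (2 * A)).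
    { apply Rmult_le_compat; try apply Rabs_pos; [rewrite /A; lra| lra]. }
    have : A * (e / (2 * A)) = e / 2 by field; lra.
    lra. }
  lra.
Qed.

Lemma Ck_cont N k (f : Pt N -> R) : Ck k f -> contN f.
Proof. by case: k => [|k] /= => [|[]]. Qed.

Lemma Ck_mono N k (f : Pt N -> R) : Ck k.+1 f -> Ck k f.
Proof.
  elim: k f => [|k IH] f /=; first by case.
  move=> [c H]; split => // i. case: (H i) => g [Hg Hc]. exists g; split => //. exact: IH.
Qed.

Lemma Ck_const N k (c : R) : Ck k (fun _ : Pt N => c).
Proof.
  elim: k c => [|k IH] c /=; first exact: contN_const.
  split; first exact: contN_const. move=> i; exists (fun _ => 0); split; [exact: is_partial_const| exact: IH].
Qed.

Lemma Ck_plus N k (f g : Pt N -> R) : Ck k f -> Ck k g -> Ck k (fun x => f x + g x).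
Proof.
  elim: k f g => [|k IH] f g /=; first exact: contN_plus.
  move=> [cf Hf] [cg Hg]; split; first exact: contN_plus.
  move=> i; case: (Hf i) => f' [pf Cf]; case: (Hg i) => g' [pg Cg].
  exists (fun x => f' x + g' x); split; [exact: is_partial_plus| exact: IH].
Qed.

Lemma Ck_mult N k (f g : Pt N -> R) : Ck k f -> Ck k g -> Ck k (fun x => f x * g x).
Proof.
  elim: k f g => [|k IH] f g /=; first exact: contN_mult.
  move=> [cf Hf] [cg Hg]; split; first exact: contN_mult.
  move=> i; case: (Hf i) => f' [pf Cf]; case: (Hg i) => g' [pg Cg].
  exists (fun x => f' x * g x + f x * g' x); split; first exact: is_partial_mult.
  apply: Ck_plus; apply: IH => //; apply: Ck_mono; [exact: (conj cg Hg) | exact: (conj cf Hf)].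
Qed.

Lemma smooth_plus N (f g : Pt N -> R) : smooth f -> smooth g -> smooth (fun x => f x + g x).
Proof. move=> Hf Hg k; exact: Ck_plus. Qed.
Lemma smooth_mult N (f g : Pt N -> R) : smooth f -> smooth g -> smooth (fun x => f x * g x).
Proof. move=> Hf Hg k; exact: Ck_mult. Qed.
Lemma sumR_ext m f g : (forall k, (k < m)%N -> f k = g k) -> sumR m f = sumR m g.
Proof.
  elim: m => [|m IH] H //=. rewrite IH; last by move=> k hk; apply H; apply: ltn_trans hk _.
  by rewrite H.
Qed.

Lemma sumR_zero m : sumR m (fun _ => 0) = 0.
Proof. elim: m => [|m IH] //=; rewrite IH; ring. Qed.

Lemma sumR_nonneg m f : (forall k, (k < m)%N -> 0 <= f k) -> 0 <= sumR m f.
Proof.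
  elim: m => [|m IH] H /=; first lra.
  have := IH (fun k hk => H k (ltn_trans hk (ltnSn m))). have := H m (ltnSn m). lra.
Qed.

Lemma sumR_nonneg_zero m f : (forall k, (k < m)%N -> 0 <= f k) -> sumR m f = 0 ->
  forall k, (k < m)%N -> f k = 0.
Proof.
  elim: m => [|m IH] H //= Hs k hk.
  have H' : forall k, (k < m)%N -> 0 <= f k by move=> k' h'; apply H; apply: ltn_trans h' _.
  have := sumR_nonneg H'. have := H m (ltnSn m) => h1 h2.
  have e1 : f m = 0 by lra. have e2 : sumR m f = 0 by lra.
  move: hk; rewrite ltnS leq_eqVlt => /orP [/eqP -> //|hk]. exact: IH.
Qed.

Definition wv n (h : 'I_n.+1 -> Pt n.+1 -> R) (x : Pt n.+1) : R :=
  sumR n (fun k => h (inord k) x) - h ord_max x.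

Lemma wave_zero_iff n (phi : Pt n.+1 -> R) g h :
  (forall i, is_partial phi i (g i)) -> (forall i, is_partial (g i) i (h i)) ->
  (wave_zero phi <-> forall x, wv h x = 0).
Proof.
  move=> Hg Hh; split.
  - move=> W x. exact: W Hg Hh x.
  - move=> W g' h' Hg' Hh' x.
    have eg : forall i, g' i = g i by move=> i; exact: is_partial_uniq (Hg' i) (Hg i).
    have eh : forall i, h' i = h i.
    { move=> i; apply: is_partial_uniq (Hh i). rewrite -eg. exact: Hh' i. }
    have := W x. rewrite /wv. by have -> : h' = h by apply functional_extensionality.
Qed.

Lemma ev_sym N (a i : 'I_N) : ev i a = ev a i.
Proof. by rewrite /ev eq_sym. Qed.

Lemma wave_quad n (a b c d : 'I_n.+1) :
  mink (ev a) (ev b) + mink (ev c) (ev d) = 0 ->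
  wave_zero (fun y : Pt n.+1 => y a * y b + y c * y d).
Proof.
  move=> E.
  have Hg := fun i => is_partial_plus (is_partial_mult (is_partial_proj a i) (is_partial_proj b i))
                                       (is_partial_mult (is_partial_proj c i) (is_partial_proj d i)).
  have Hh := fun i => is_partial_plus
     (is_partial_plus (is_partial_mult (is_partial_const (ev i a) i) (is_partial_proj b i))
                      (is_partial_mult (is_partial_proj a i) (is_partial_const (ev i b) i)))
     (is_partial_plus (is_partial_mult (is_partial_const (ev i c) i) (is_partial_proj d i))
                      (is_partial_mult (is_partial_proj c i) (is_partial_const (ev i d) i))).
  apply/(wave_zero_iff Hg Hh) => x.
  rewrite /wv /mink in E *.
  have S : forall m, sumR m (fun k => 0 * x b + ev (inord k) a * ev (inord k) b +
       (ev (inord k) a * ev (inord k) b + x a * 0) +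
     (0 * x d + ev (inord k) c * ev (inord k) d + (ev (inord k) c * ev (inord k) d + x c * 0)))
     = 2 * (sumR m (fun k => ev a (inord k) * ev b (inord k)) + sumR m (fun k => ev c (inord k) * ev d (inord k))).
  { elim => [|m IH] /=; [ring| rewrite IH (ev_sym a (inord m)) (ev_sym b (inord m)) (ev_sym c (inord m)) (ev_sym d (inord m)); ring]. }
  rewrite S (ev_sym a) (ev_sym b) (ev_sym c) (ev_sym d). lra.
Qed.

Lemma val_inord_lt n k : (k < n)%N -> (@inord n k : nat) = k.
Proof. move=> hk; rewrite inordK //; exact: ltn_trans hk (ltnSn n). Qed.

Lemma mink_ev_neq n (a b : 'I_n.+1) : a != b -> mink (ev a) (ev b) = 0.
Proof.
  move=> hab. rewrite /mink.
  have P : forall k : 'I_n.+1, ev a k * ev b k = 0.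
  { move=> k; rewrite /ev. case: (eqVneq k a) => [->|_]; last ring.
    rewrite (negbTE hab); ring. }
  rewrite (sumR_ext (g := fun _ => 0)); last by move=> k _; apply P.
  rewrite sumR_zero P; ring.
Qed.

Lemma mink_ev_max n : mink (ev (@ord_max n)) (ev ord_max) = -1.
Proof.
  rewrite /mink (sumR_ext (g := fun _ => 0)); last first.
  { move=> k hk; rewrite /ev.
    have -> : (@inord n k == ord_max) = false.
    { apply/negbTE/negP => /eqP/(congr1 val) /=; rewrite val_inord_lt // => e.
      by rewrite e ltnn in hk. }
    ring. }
  rewrite sumR_zero /ev eqxx; ring.
Qed.

Lemma mink_ev_lt n (a : 'I_n.+1) : (a < n)%N -> mink (ev a) (ev a) = 1.
Proof.
  move=> ha. rewrite /mink.
  have S : forall m, (m <= n)%N -> sumR m (fun k => ev a (inord k) * ev a (inord k)) = if (a < m)%N then 1 else 0.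
  { elim => [|m IH] hm /=; first by [].
    rewrite IH; last exact: ltnW.
    rewrite /ev. have e : (@inord n m == a) = (m == a).
    { apply/eqP/eqP => [<-|->]; first by rewrite val_inord_lt.
      by apply/val_inj; rewrite /= val_inord_lt. }
    rewrite e [(a < m.+1)%N]ltnS [(a <= m)%N]leq_eqVlt.
    case: (eqVneq (a : nat) m) => [e2|ne] /=.
    { rewrite e2 ltnn; simpl; ring. }
    ring. }
  rewrite S // ha /ev.
  have -> : (@ord_max n == a) = false.
  { apply/negbTE/negP => /eqP e; by rewrite -e ltnn in ha. }
  ring.
Qed.

Lemma wave_x n (Fa Fb Fc Fd : Pt n.+1 -> R) (Ja Jb Jc Jd Ha Hb Hc Hd : 'I_n.+1 -> Pt n.+1 -> R) :
  (forall i, is_partial Fa i (Ja i)) -> (forall i, is_partial Fb i (Jb i)) ->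
  (forall i, is_partial Fc i (Jc i)) -> (forall i, is_partial Fd i (Jd i)) ->
  (forall i, is_partial (Ja i) i (Ha i)) -> (forall i, is_partial (Jb i) i (Hb i)) ->
  (forall i, is_partial (Jc i) i (Hc i)) -> (forall i, is_partial (Jd i) i (Hd i)) ->
  (forall x, wv Ha x = 0) -> (forall x, wv Hb x = 0) ->
  (forall x, wv Hc x = 0) -> (forall x, wv Hd x = 0) ->
  wave_zero (fun z => Fa z * Fb z + Fc z * Fd z) ->
  forall x, mink (fun j => Ja j x) (fun j => Jb j x) + mink (fun j => Jc j x) (fun j => Jd j x) = 0.
Proof.
  move=> pa pb pc pd qa qb qc qd wa wb wc wd W x.
  have Hg := fun i => is_partial_plus (is_partial_mult (pa i) (pb i)) (is_partial_mult (pc i) (pd i)).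
  have Hh := fun i => is_partial_plus
     (is_partial_plus (is_partial_mult (qa i) (pb i)) (is_partial_mult (pa i) (qb i)))
     (is_partial_plus (is_partial_mult (qc i) (pd i)) (is_partial_mult (pc i) (qd i))).
  have := (proj1 (wave_zero_iff Hg Hh) W) x.
  move: (wa x) (wb x) (wc x) (wd x). rewrite /wv /mink.
  have S : forall m, sumR m (fun k =>
     Ha (inord k) x * Fb x + Ja (inord k) x * Jb (inord k) x +
     (Ja (inord k) x * Jb (inord k) x + Fa x * Hb (inord k) x) +
     (Hc (inord k) x * Fd x + Jc (inord k) x * Jd (inord k) x +
      (Jc (inord k) x * Jd (inord k) x + Fc x * Hd (inord k) x)))
   = Fb x * sumR m (fun k => Ha (inord k) x) + Fa x * sumR m (fun k => Hb (inord k) x)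
     + Fd x * sumR m (fun k => Hc (inord k) x) + Fc x * sumR m (fun k => Hd (inord k) x)
     + 2 * sumR m (fun k => Ja (inord k) x * Jb (inord k) x)
     + 2 * sumR m (fun k => Jc (inord k) x * Jd (inord k) x).
  { elim => [|m IH] /=; [ring| rewrite IH; ring]. }
  rewrite S => e1 e2 e3 e4 e5. nra.
Qed.
Lemma fin_min N (P : 'I_N -> R -> Prop) :
  (forall k d d', P k d -> 0 < d' <= d -> P k d') ->
  (forall k, exists d, 0 < d /\ P k d) -> exists d, 0 < d /\ forall k, P k d.
Proof.
  move=> mono H.
  suff : forall m, exists d, 0 < d /\ forall k : 'I_N, (k < m)%N -> P k d.
  { case/(_ N) => d [dp Hd]; exists d; split => // k; exact: Hd. }
  elim => [|m [d [dp Hd]]]; first by exists 1; split => //; lra.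
  case: (ltnP m N) => hm.
  - case: (H (Ordinal hm)) => d' [d'p Hd'].
    exists (Rmin d d'); split; first by apply Rmin_pos.
    move=> k; rewrite ltnS leq_eqVlt => /orP [/eqP ek|hk].
    + have -> : k = Ordinal hm by apply/val_inj.
      apply: mono Hd' _; split; [by apply Rmin_pos| apply Rmin_r].
    + apply: mono (Hd k hk) _; split; [by apply Rmin_pos| apply Rmin_l].
  - exists d; split => // k hk. apply Hd. by apply: leq_trans (ltn_ord k) hm.
Qed.

Lemma fin_bound N (a : 'I_N -> R) : exists C, 1 <= C /\ forall k, a k <= C.
Proof.
  suff : forall m, exists C, 1 <= C /\ forall k : 'I_N, (k < m)%N -> a k <= C.
  { case/(_ N) => C [c1 HC]; exists C; split => // k; exact: HC. }
  elim => [|m [C [c1 HC]]]; first by exists 1; split => //; lra.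
  case: (ltnP m N) => hm.
  - exists (Rmax C (a (Ordinal hm))); split; first by apply: Rle_trans c1 (Rmax_l _ _).
    move=> k; rewrite ltnS leq_eqVlt => /orP [/eqP ek|hk].
    + have -> : k = Ordinal hm by apply/val_inj.
      apply Rmax_r.
    + apply: Rle_trans (HC k hk) (Rmax_l _ _).
  - exists C; split => // k hk. apply HC. by apply: leq_trans (ltn_ord k) hm.
Qed.

Lemma D1 N (f : Pt N -> R) (g : 'I_N -> Pt N -> R) x :
  (forall i, is_partial f i (g i)) -> (forall i, contN (g i)) -> (forall i, g i x = 0) ->
  forall eps, 0 < eps -> exists delta, 0 < delta /\ forall z rho, rho < delta ->
    (forall k, Rabs (z k - x k) <= rho) -> Rabs (f z - f x) <= INR N * eps * rho.
Proof.
  move=> Hp Hc H0 eps he.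
  have [d [dp Hd]] : exists d, 0 < d /\ forall k y, (forall k', Rabs (y k' - x k') < d) -> Rabs (g k y) < eps.
  { apply: (fin_min (P := fun k d => forall y, (forall k', Rabs (y k' - x k') < d) -> Rabs (g k y) < eps)).
    - move=> k d d' Hk [_ hd] y Hy; apply Hk => k'; apply: Rlt_le_trans (Hy k') hd.
    - move=> k; case: (Hc k x eps he) => d [dp Hd]; exists d; split => // y Hy.
      have := Hd y Hy; by rewrite H0 Rminus_0_r. }
  exists d; split => // z rho hrho Hz.
  pose p (m : nat) : Pt N := fun k => if (k < m)%N then z k else x k.
  have p0 : p 0%N = x by apply functional_extensionality => k.
  have pN : p N = z by apply functional_extensionality => k; rewrite /p ltn_ord.
  suff : forall m, (m <= N)%N -> Rabs (f (p m) - f x) <= INR m * eps * rho.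
  { by move/(_ N (leqnn N)); rewrite pN. }
  elim => [|m IH] hm.
  { rewrite p0 Rminus_diag Rabs_R0 /=; lra. }
  have hmN : (m < N)%N by [].
  set km := Ordinal hmN.
  set t := z km - x km.
  have rho0 : 0 <= rho by apply: Rle_trans (Rabs_pos _) (Hz km).
  have ps : p m.+1 = shift (p m) km t.
  { apply functional_extensionality => k; rewrite /p /shift /t ltnS leq_eqVlt.
    case: (eqVneq k km) => [->|nk] /=.
    - rewrite eqxx /= ltnn. ring.
    - have : (k : nat) != m by apply: contra nk => /eqP e; apply/eqP/val_inj.
      by move/negbTE => ->. }
  have [c [Ec Hc']] := MVT_abs (fun s => f (shift (p m) km s)) (fun s => g km (shift (p m) km s)) 0 t
     (fun c _ => is_partial_at (Hp km) (p m) c).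
  have ct : Rabs c <= Rabs t.
  { move: Hc'; rewrite /Rmin /Rmax; case: (Rle_dec 0 t) => ht hc; split_Rabs; lra. }
  have tr : Rabs t <= rho by apply Hz.
  have gq : Rabs (g km (shift (p m) km c)) < eps.
  { apply Hd => k'. rewrite /shift.
    case: (eqVneq k' km) => [->|nk].
    - rewrite /p /= ltnn. replace (x km + c - x km) with c by ring. lra.
    - rewrite /p. case: (k' < m)%N.
      + apply: Rle_lt_trans (Hz k') hrho.
      + rewrite Rminus_diag Rabs_R0; lra. }
  have step : Rabs (f (p m.+1) - f (p m)) <= eps * rho.
  { rewrite ps. have := Ec. rewrite shift0 => ->.
    apply Rmult_le_compat; try apply Rabs_pos; [lra| rewrite Rminus_0_r; lra]. }
  have := IH (ltnW hm).
  replace (f (p m.+1) - f x) with ((f (p m.+1) - f (p m)) + (f (p m) - f x)) by ring.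
  move=> h1. apply: Rle_trans (Rabs_triang _ _) _. rewrite S_INR. lra.
Qed.

Lemma D2 N (f : Pt N -> R) (g : 'I_N -> Pt N -> R) x (gam : R -> Pt N) (dg : 'I_N -> R) :
  (forall i, is_partial f i (g i)) -> (forall i, contN (g i)) -> (forall i, g i x = 0) ->
  gam 0 = x -> (forall k, derivable_pt_lim (fun s => gam s k) 0 (dg k)) ->
  derivable_pt_lim (fun s => f (gam s)) 0 0.
Proof.
  move=> Hp Hc H0 g0 Hd eps he.
  have [C [C1 HC]] := fin_bound (fun k => Rabs (dg k) + 1).
  have [d1 [d1p Hd1]] : exists d, 0 < d /\ forall k h, h <> 0 -> Rabs h < d -> Rabs (gam h k - x k) <= C * Rabs h.
  { apply: (fin_min (P := fun k d => forall h, h <> 0 -> Rabs h < d -> Rabs (gam h k - x k) <= C * Rabs h)).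
    - move=> k d d' Hk [_ hd] h hn hh; apply Hk => //; lra.
    - move=> k; case: (Hd k 1 ltac:(lra)) => d Hdk; exists d; split; first exact: cond_pos.
      move=> h hn hh. have := Hdk h hn hh. rewrite Rplus_0_l g0 => H1.
      have hp : 0 < Rabs h by apply Rabs_pos_lt.
      have e : gam h k - x k = h * ((gam h k - x k) / h - dg k) + h * dg k by field.
      rewrite e. apply: Rle_trans (Rabs_triang _ _) _. rewrite !Rabs_mult.
      have := HC k. have := Rabs_pos (dg k). nra. }
  have NC : 0 < 2 * (INR N + 1) * C by have := pos_INR N; nra.
  set e' := eps / (2 * (INR N + 1) * C).
  have e'p : 0 < e' by apply Rdiv_lt_0_compat.
  have [d2 [d2p Hd2]] := D1 Hp Hc H0 e'p.
  have dp : 0 < Rmin d1 (d2 / C) by apply Rmin_pos => //; apply Rdiv_lt_0_compat; lra.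
  exists (mkposreal _ dp) => h hn /= hh.
  have hp : 0 < Rabs h by apply Rabs_pos_lt.
  have hh1 : Rabs h < d1 by apply: Rlt_le_trans hh (Rmin_l _ _).
  have hh2 : Rabs h < d2 / C by apply: Rlt_le_trans hh (Rmin_r _ _).
  have B := Hd2 (gam h) (C * Rabs h) ltac:(apply (Rmult_lt_reg_r (/ C)); [apply Rinv_0_lt_compat; lra|];
      replace (C * Rabs h * / C) with (Rabs h) by (field; lra); exact hh2)
      (fun k => Hd1 k h hn hh1).
  rewrite Rplus_0_l g0 Rminus_0_r.
  have e1 : (f (gam h) - f x) / h = (f (gam h) - f x) * / h by [].
  rewrite e1 Rabs_mult Rabs_inv.
  apply (Rmult_lt_reg_r (Rabs h)) => //. rewrite Rmult_assoc Rinv_l; last lra.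
  rewrite Rmult_1_r. apply: Rle_lt_trans B _.
  have : INR N * e' * (C * Rabs h) = eps * Rabs h * (INR N / (2 * (INR N + 1))).
  { rewrite /e'; field; have := pos_INR N; lra. }
  move=> ->.
  have q : INR N / (2 * (INR N + 1)) < 1.
  { have := pos_INR N => hN. apply (Rmult_lt_reg_r (2 * (INR N + 1))); first lra.
    field_simplify; lra. }
  have := Rmult_lt_0_compat _ _ he hp. nra.
Qed.
Lemma second N (f : Pt N -> R) (J : 'I_N -> Pt N -> R) :
  smooth f -> (forall i, is_partial f i (J i)) -> forall i, contN (J i) /\ exists h, is_partial (J i) i h.
Proof.
  move=> sf HJ i. have [_ H] := sf 2%N. case: (H i) => g [pg [cg Hg]].
  have e : g = J i by exact: is_partial_uniq pg (HJ i).
  rewrite -e; split => //. case: (Hg i) => h [ph _]; by exists h.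
Qed.

Lemma choice2 N (P : 'I_N -> 'I_N -> (Pt N -> R) -> Prop) :
  (forall a i, exists h, P a i h) -> exists H, forall a i, P a i (H a i).
Proof.
  move=> ex. exists (fun a i => proj1_sig (constructive_indefinite_description _ (ex a i))).
  move=> a i; exact: proj2_sig.
Qed.

Lemma choice1 N (P : 'I_N -> R -> Prop) :
  (forall a, exists h, P a h) -> exists H, forall a, P a (H a).
Proof.
  move=> ex. exists (fun a => proj1_sig (constructive_indefinite_description _ (ex a))).
  move=> a; exact: proj2_sig.
Qed.

Lemma mink_lin2 n (A B : Pt n.+1) u0 u1 :
  let w := fun j => u0 * A j + u1 * B j in
  mink w w = u0 * u0 * mink A A + u0 * u1 * (mink A B + mink B A) + u1 * u1 * mink B B.
Proof.
  rewrite /mink /=.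
  have S : forall m, sumR m (fun k => (u0 * A (inord k) + u1 * B (inord k)) * (u0 * A (inord k) + u1 * B (inord k)))
    = u0 * u0 * sumR m (fun k => A (inord k) * A (inord k)) + u0 * u1 * (sumR m (fun k => A (inord k) * B (inord k))
       + sumR m (fun k => B (inord k) * A (inord k))) + u1 * u1 * sumR m (fun k => B (inord k) * B (inord k)).
  { elim => [|m IH] /=; [ring| rewrite IH; ring]. }
  rewrite S; ring.
Qed.

Unset Implicit Arguments. Set Strict Implicit.

Theorem theorem2p1 (n : nat) (hn : (2 <= n)%N)
  (F G : Pt n.+1 -> Pt n.+1) (hF : diffeo_with_inv F G)
  (hwave : forall phi : Pt n.+1 -> R, smooth phi ->
     (wave_zero phi <-> wave_zero (fun y => phi (G y))))
  (J : 'I_n.+1 -> 'I_n.+1 -> Pt n.+1 -> R)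
  (hJ : forall i j, is_partial (fun x => F x i) j (J i j)) :
  forall x : Pt n.+1,
    let r := fun i : 'I_n.+1 => (fun j : 'I_n.+1 => J i j x) in
    (forall i j : 'I_n.+1, i != j -> mink (r i) (r j) = 0) /\
    (forall i : 'I_n.+1, (i < n)%N -> mink (r i) (r i) = - mink (r ord_max) (r ord_max)) /\
    (forall i : 'I_n.+1, (i < n)%N -> spacelike (r i)) /\
    timelike (r ord_max).
Proof.
  move: hF => [sF [sG [GF FG]]].
  have sec := fun a => second (sF a) (hJ a).
  have [H hH] : exists H, forall a i, is_partial (J a i) i (H a i).
  { apply (@choice2 n.+1 (fun a i h => is_partial (J a i) i h)) => a i. exact: (proj2 (sec a i)). }
  have box : forall a z, wv (H a) z = 0.
  { move=> a. apply (proj1 (wave_zero_iff (hJ a) (hH a))). apply (proj2 (hwave _ (sF a))).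
    have -> : (fun y => F (G y) a) = (fun y => y a) by apply functional_extensionality => y; rewrite FG.
    apply/(wave_zero_iff (fun i => is_partial_proj a i) (fun i => is_partial_const (ev i a) i)) => z.
    rewrite /wv /= sumR_zero; ring. }
  have quad : forall a b c d : 'I_n.+1, mink (ev a) (ev b) + mink (ev c) (ev d) = 0 ->
     forall z, mink (fun j => J a j z) (fun j => J b j z) + mink (fun j => J c j z) (fun j => J d j z) = 0.
  { move=> a b c d E.
    apply: (wave_x (hJ a) (hJ b) (hJ c) (hJ d) (hH a) (hH b) (hH c) (hH d) (box a) (box b) (box c) (box d)).
    apply (proj2 (hwave _ (smooth_plus (smooth_mult (sF a) (sF b)) (smooth_mult (sF c) (sF d))))).
    have -> : (fun y => F (G y) a * F (G y) b + F (G y) c * F (G y) d) = (fun y => y a * y b + y c * y d)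
      by apply functional_extensionality => y; rewrite FG.
    exact: wave_quad. }
  move=> x r.
  have orth : forall i j : 'I_n.+1, i != j -> mink (r i) (r j) = 0.
  { move=> i j hij. have := quad i j i j ltac:(rewrite mink_ev_neq //; ring) x. rewrite /r; lra. }
  have diag : forall i : 'I_n.+1, (i < n)%N -> mink (r i) (r i) = - mink (r ord_max) (r ord_max).
  { move=> i hi. have := quad i i ord_max ord_max ltac:(rewrite mink_ev_lt // mink_ev_max; ring) x.
    rewrite /r; lra. }
  set lam := mink (r ord_max) (r ord_max).
  suff neg : lam < 0.
  { split => //; split => //; split => //. move=> i hi; left. rewrite diag //. rewrite -/lam; lra. }
  apply Rnot_le_lt => lam0.
  set i0 : 'I_n.+1 := inord 0. set i1 : 'I_n.+1 := inord 1.
  have v0 : (i0 : nat) = 0%N by rewrite /i0 inordK.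
  have v1 : (i1 : nat) = 1%N by rewrite /i1 inordK //; apply: ltn_trans hn _.
  have i0n : (i0 < n)%N by rewrite v0; apply: ltn_trans hn.
  have i1n : (i1 < n)%N by rewrite v1.
  have i01 : i0 != i1 by apply/negP => /eqP /(congr1 val); rewrite /= v0 v1.
  set p := J i0 ord_max x. set q := J i1 ord_max x.
  have [u0 [u1 [unz up]]] : exists u0 u1, (u0 <> 0 \/ u1 <> 0) /\ u0 * p + u1 * q = 0.
  { case: (Req_dec p 0) => hp.
    - exists 1, 0; split; [left; lra| rewrite hp; ring].
    - exists q, (- p); split; [right; lra| ring]. }
  set w := fun j => u0 * r i0 j + u1 * r i1 j.
  have mw : mink w w = - lam * (u0 * u0 + u1 * u1).
  { have L := mink_lin2 (r i0) (r i1) u0 u1. simpl in L. rewrite /w L.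
    have o1 := orth i0 i1 i01. have o2 := orth i1 i0 ltac:(by rewrite eq_sym).
    have d0 := diag i0 i0n. have d1 := diag i1 i1n. rewrite -/lam in d0 d1.
    rewrite o1 o2 d0 d1. ring. }
  have wN : w ord_max = 0 by rewrite /w /r -/p -/q.
  have mw' : mink w w = sumR n (fun k => w (inord k) * w (inord k)) by rewrite /mink wN; ring.
  have sq : forall k, (k < n)%N -> 0 <= w (inord k) * w (inord k) by move=> k _; apply Rle_0_sqr.
  have pos := sumR_nonneg sq.
  have u2 : 0 < u0 * u0 + u1 * u1.
  { have := Rle_0_sqr u0; have := Rle_0_sqr u1; rewrite /Rsqr.
    case: unz => h. have := Rsqr_pos_lt _ h; rewrite /Rsqr; lra. have := Rsqr_pos_lt _ h; rewrite /Rsqr; lra. }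
  have lz : lam = 0.
  { have : 0 <= - lam * (u0 * u0 + u1 * u1) by rewrite -mw mw'.
    have : 0 <= lam * (u0 * u0 + u1 * u1) by apply Rmult_le_pos; lra.
    move=> h1 h2. have : lam * (u0 * u0 + u1 * u1) = 0 by lra.
    case/Rmult_integral => //; lra. }
  have w0 : forall j, w j = 0.
  { move=> j. case: (ltnP j n) => hj.
    - have := sumR_nonneg_zero sq ltac:(rewrite -mw' mw lz; ring) hj.
      have -> : (@inord n j) = j by apply/val_inj; rewrite /= inordK //; apply: ltn_trans hj _.
      move=> h. by case: (Rmult_integral _ _ h).
    - have -> : j = ord_max by apply/val_inj => /=; apply/eqP; rewrite eqn_leq hj -ltnS ltn_ord.
      exact: wN. }
  have key : forall jj, u0 * ev jj i0 + u1 * ev jj i1 = 0.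
  { move=> jj.
    have [dg hdg] : exists dg : 'I_n.+1 -> R, forall k,
        derivable_pt_lim (fun s => G (shift (F x) jj s) k) 0 (dg k).
    { apply (@choice1 n.+1 (fun k l => derivable_pt_lim (fun s => G (shift (F x) jj s) k) 0 l)) => k.
      have [_ Hk] := sG k 1%N. case: (Hk jj) => g [pg _]. exists (g (F x)). exact: pg (F x). }
    have Pf := fun j => is_partial_plus (is_partial_mult (is_partial_const u0 j) (hJ i0 j))
                                        (is_partial_mult (is_partial_const u1 j) (hJ i1 j)).
    have Cf : forall j, contN (fun z => 0 * F z i0 + u0 * J i0 j z + (0 * F z i1 + u1 * J i1 j z)).
    { move=> j. apply: contN_plus; apply: contN_plus.
      - apply: contN_mult; [exact: contN_const| exact: Ck_cont (sF i0 0%N)].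
      - apply: contN_mult; [exact: contN_const| exact: (proj1 (sec i0 j))].
      - apply: contN_mult; [exact: contN_const| exact: Ck_cont (sF i1 0%N)].
      - apply: contN_mult; [exact: contN_const| exact: (proj1 (sec i1 j))]. }
    have Z : forall j, 0 * F x i0 + u0 * J i0 j x + (0 * F x i1 + u1 * J i1 j x) = 0.
    { move=> j. have := w0 j. rewrite /w /r. lra. }
    have g0 : (fun s => G (shift (F x) jj s)) 0 = x by rewrite /= shift0 GF.
    have D := D2 Pf Cf Z g0 hdg.
    have Pp := is_partial_plus (is_partial_mult (is_partial_const u0 jj) (is_partial_proj i0 jj))
                               (is_partial_mult (is_partial_const u1 jj) (is_partial_proj i1 jj)) (F x).
    have E : (fun s => u0 * F (G (shift (F x) jj s)) i0 + u1 * F (G (shift (F x) jj s)) i1)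
           = (fun t => u0 * shift (F x) jj t i0 + u1 * shift (F x) jj t i1).
    { apply functional_extensionality => t; by rewrite FG. }
    simpl in D. rewrite E in D.
    have := uniqueness_limite _ _ _ _ D Pp. lra. }
  case: (Req_dec u0 0) => hu0.
  - have := key i1. rewrite /ev eqxx.
    have -> : (i0 == i1) = false by apply/negbTE.
    case: unz => //. lra.
  - have := key i0. rewrite /ev eqxx.
    have -> : (i1 == i0) = false by apply/negbTE; rewrite eq_sym.
    lra.
Qed.
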